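(* Every star is $\mathbb{Z}_2\times\mathbb{Z}_2$-cordial.
   Context: A star is a finite hypergraph with at least one edge, every edge having at least two vertices, in which there is a vertex $x$ (the center) contained in all edges, the edges are pairwise disjoint apart from $x$, and every vertex lies in some edge (edge sizes may differ). Let $A=\mathbb{Z}_2\times\mathbb{Z}_2$. For a hypergraph $H=(V,E)$ and a labeling $c:V\to A$, write $v_c(a)=|c^{-1}(a)|$; $c$ is $A$-friendly if $|v_c(a)-v_c(b)|\le 1$ for all $a,b\in A$. It induces $c^*:E\to A$, $c^*(e)=\sum_{v\in e}c(v)$; write $e_{c^*}(a)=|(c^* )^{-1}(a)|$. $H$ is $A$-cordial if it admits an $A$-friendly labeling $c$ with $|e_{c^*}(a)-e_{c^*}(b)|\le 1$ for all $a,b\in A$. *)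

(* Defs.v *)
From HB Require Import structures.
From mathcomp Require Import all_boot all_order all_algebra.
Set Implicit Arguments. Unset Strict Implicit. Unset Printing Implicit Defensive.
Import GRing.Theory.

Notation Agrp := ('Z_2 * 'Z_2)%type.

Definition is_star (V : finType) (E : {set {set V}}) : Prop :=
  E != set0 /\
  (forall e, e \in E -> 2 <= #|e|) /\
  exists x : V,
    (forall e, e \in E -> x \in e) /\
    (forall e1 e2, e1 \in E -> e2 \in E -> e1 != e2 -> e1 :&: e2 = [set x]) /\
    (forall v : V, exists2 e, e \in E & v \in e).

Definition vcount (V : finType) (c : V -> Agrp) (a : Agrp) : nat :=
  #|[set v | c v == a]|.

Definition edge_label (V : finType) (c : V -> Agrp) (e : {set V}) : Agrp :=
  (\sum_(v in e) c v)%R.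

Definition ecount (V : finType) (E : {set {set V}}) (c : V -> Agrp) (a : Agrp)
  : nat := #|[set e in E | edge_label c e == a]|.

Definition close1 (m n : nat) : bool := (m <= n.+1) && (n <= m.+1).

Definition A_friendly (V : finType) (c : V -> Agrp) : Prop :=
  forall a b : Agrp, close1 (vcount c a) (vcount c b).

Definition A_cordial (V : finType) (E : {set {set V}}) : Prop :=
  exists c : V -> Agrp, A_friendly c /\
    forall a b : Agrp, close1 (ecount E c a) (ecount E c b).

(* Main.v *)
Require Import Defs.
From mathcomp Require Import all_boot all_order all_algebra zify.
Set Implicit Arguments. Unset Strict Implicit. Unset Printing Implicit Defensive.
Import GRing.Theory.

Definition lab (n : nat) : Agrp := ((n./2)%:R, n%:R)%R.
Definition elems : seq Agrp := map lab (iota 0 4).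

Lemma elemsP (P : pred Agrp) : all P elems -> forall a, P a.
Proof.
move=> /allP H [[[|[|x]] Hx] [[|[|y]] Hy]] //; apply: H.
all: by [].
Qed.


Definition esum (L : seq Agrp) : Agrp := foldr (fun x y => x + y)%R 0%R L.
Definition vc (c0 : Agrp) (Ls : seq (seq Agrp)) (a : Agrp) : nat :=
  (c0 == a) + sumn (map (count_mem a) Ls).
Definition ec (c0 : Agrp) (Ls : seq (seq Agrp)) (a : Agrp) : nat :=
  count (fun L => (c0 + esum L)%R == a) Ls.
Definition bal c0 Ls : Prop := forall a b,
  close1 (vc c0 Ls a) (vc c0 Ls b) /\ close1 (ec c0 Ls a) (ec c0 Ls b).
Definition balb c0 Ls : bool := all (fun a => all (fun b =>
  close1 (vc c0 Ls a) (vc c0 Ls b) && close1 (ec c0 Ls a) (ec c0 Ls b)) elems) elems.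

Lemma balbP c0 Ls : balb c0 Ls -> bal c0 Ls.
Proof.
move=> H a b; have /andP[-> ->] // := elemsP (elemsP H a) b.
Qed.

Definition Good (ks : seq nat) := exists c0 Ls, perm_eq (map size Ls) ks /\ bal c0 Ls.

Lemma close1_add m n k : close1 (m + k) (n + k) = close1 m n.
Proof. by rewrite /close1 -!addSn !leq_add2r. Qed.

Lemma vc_perm c0 Ls Ls' a : perm_eq Ls Ls' -> vc c0 Ls a = vc c0 Ls' a.
Proof. by move=> H; rewrite /vc (perm_sumn (perm_map _ H)). Qed.
Lemma ec_perm c0 Ls Ls' a : perm_eq Ls Ls' -> ec c0 Ls a = ec c0 Ls' a.
Proof. by move=> H; rewrite /ec (permP H). Qed.

Lemma esum_cat s t : esum (s ++ t) = (esum s + esum t)%R.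
Proof. by elim: s => [|x s IH] /=; rewrite ?add0r // IH addrA. Qed.

Lemma esum_elems : esum elems = 0%R. Proof. by apply/eqP. Qed.
Lemma count_elems a : count_mem a elems = 1.
Proof. by apply/eqP; move: a; apply: elemsP. Qed.


Definition Gn (k : nat) : seq (seq nat) :=
  match k with
  | 1 => [:: [:: 0]; [:: 1]; [:: 2]; [:: 3]]
  | 2 => [:: [:: 0; 0]; [:: 2; 3]; [:: 1; 3]; [:: 1; 2]]
  | 3 => [:: [:: 1; 2; 3]; [:: 0; 2; 3]; [:: 0; 1; 3]; [:: 0; 1; 2]]
  | _ => [:: [:: 0; 1; 2; 3]; [:: 1; 1; 1; 0]; [:: 2; 2; 2; 0]; [:: 3; 3; 3; 0]]
  end.
Definition G k := map (map lab) (Gn k).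

Lemma G_ok k : 0 < k <= 4 -> [/\ map size (G k) = nseq 4 k,
  (forall a, sumn (map (count_mem a) (G k)) = k) &
  (forall c0 a, count (fun L => (c0 + esum L)%R == a) (G k) = 1)].
Proof.
case: k => [|[|[|[|[|k]]]]] // _; split => //.
all: try (by move=> a; apply/eqP; move: a; apply: elemsP).
all: by move=> c0 a; apply/eqP; move: a; apply: elemsP; move: c0; apply: elemsP.
Qed.

Lemma good_perm ks ks' : perm_eq ks ks' -> Good ks -> Good ks'.
Proof.
move=> P [c0 [Ls [H1 H2]]]; exists c0, Ls; split => //; exact: perm_trans P.
Qed.

Lemma good_add4 ks k : 0 < k <= 4 -> Good ks -> Good (nseq 4 k ++ ks).
Proof.
move=> /G_ok [H1 H2 H3] [c0 [Ls [P B]]]; exists c0, (G k ++ Ls); split.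
  by rewrite map_cat H1 perm_cat2l.
move=> a b.
have Hv : forall a, vc c0 (G k ++ Ls) a = vc c0 Ls a + k.
  by move=> x; rewrite /vc map_cat sumn_cat H2 addnCA addnC.
have He : forall a, ec c0 (G k ++ Ls) a = ec c0 Ls a + 1.
  by move=> x; rewrite /ec count_cat H3 addnC.
by rewrite !Hv !He !close1_add.
Qed.

Lemma good_big ks k : Good (k :: ks) -> Good (k + 4 :: ks).
Proof.
move=> [c0 [Ls [P B]]].
have : k \in map size Ls by rewrite (perm_mem P) mem_head.
case/mapP => L LLs Hk.
have PL := perm_to_rem LLs.
exists c0, ((L ++ elems) :: rem L Ls); split.
  have := perm_map size PL; rewrite (perm_sym) => /perm_trans /(_ P).
  by rewrite /= -Hk perm_cons size_cat => Q; rewrite Hk perm_cons.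
move=> a b.
have Hv : forall a, vc c0 ((L ++ elems) :: rem L Ls) a = vc c0 Ls a + 1.
  move=> x; rewrite (vc_perm _ _ PL) /vc /= count_cat count_elems.
  rewrite -!addnA; congr (_ + _).
  by rewrite (addnC 1).
have He : forall a, ec c0 ((L ++ elems) :: rem L Ls) a = ec c0 Ls a + 0.
  by move=> y; rewrite addn0 (ec_perm _ _ PL) /ec /= esum_cat esum_elems addr0.
by rewrite !Hv !He !close1_add.
Qed.


Definition table : seq (nat * seq (seq nat)) := [::
  (0, [::]);
  (0, [:: [:: 0; 1; 2; 3]]);
  (0, [:: [:: 0; 1; 1; 1]; [:: 2; 2; 3; 3]]);
  (0, [:: [:: 0; 0; 0; 1]; [:: 1; 2; 2; 2]; [:: 1; 3; 3; 3]]);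
  (0, [:: [:: 1; 2; 3]]);
  (1, [:: [:: 0; 0; 1]; [:: 2; 2; 3; 3]]);
  (0, [:: [:: 0; 0; 1]; [:: 1; 2; 2; 2]; [:: 1; 3; 3; 3]]);
  (0, [:: [:: 0; 0; 0]; [:: 1; 1; 1; 2]; [:: 1; 2; 2; 3]; [:: 2; 3; 3; 3]]);
  (0, [:: [:: 0; 1; 1]; [:: 2; 2; 3]]);
  (0, [:: [:: 0; 0; 1]; [:: 1; 1; 2]; [:: 2; 2; 3; 3]]);
  (0, [:: [:: 0; 0; 1]; [:: 1; 1; 2]; [:: 1; 2; 2; 2]; [:: 3; 3; 3; 3]]);
  (0, [:: [:: 0; 0; 0]; [:: 0; 1; 2]; [:: 1; 1; 1; 2]; [:: 1; 2; 2; 3]; [:: 2; 3; 3; 3]]);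
  (0, [:: [:: 0; 0; 1]; [:: 1; 2; 3]; [:: 2; 2; 3]]);
  (1, [:: [:: 0; 0; 0]; [:: 0; 1; 2]; [:: 1; 1; 2]; [:: 2; 3; 3; 3]]);
  (0, [:: [:: 0; 0; 0]; [:: 0; 1; 2]; [:: 1; 1; 1]; [:: 1; 2; 2; 3]; [:: 2; 3; 3; 3]]);
  (0, [:: [:: 0; 0; 0]; [:: 0; 0; 1]; [:: 1; 1; 1]; [:: 1; 2; 2; 2]; [:: 1; 2; 2; 3]; [:: 3; 3; 3; 3]]);
  (0, [:: [:: 1; 2]]);
  (0, [:: [:: 0; 1]; [:: 1; 2; 2; 3]]);
  (0, [:: [:: 0; 0]; [:: 1; 1; 1; 2]; [:: 2; 3; 3; 3]]);
  (0, [:: [:: 0; 0]; [:: 1; 1; 1; 2]; [:: 1; 2; 2; 3]; [:: 2; 3; 3; 3]]);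
  (0, [:: [:: 0; 1]; [:: 1; 2; 3]]);
  (0, [:: [:: 0; 0]; [:: 1; 1; 2]; [:: 1; 2; 3; 3]]);
  (1, [:: [:: 0; 0]; [:: 0; 0; 1]; [:: 1; 2; 2; 2]; [:: 1; 3; 3; 3]]);
  (0, [:: [:: 0; 0]; [:: 0; 0; 1]; [:: 1; 1; 1; 2]; [:: 1; 2; 2; 3]; [:: 2; 3; 3; 3]]);
  (0, [:: [:: 0; 1]; [:: 0; 1; 2]; [:: 2; 3; 3]]);
  (0, [:: [:: 0; 0]; [:: 0; 1; 2]; [:: 1; 1; 2]; [:: 2; 3; 3; 3]]);
  (0, [:: [:: 0; 0]; [:: 0; 0; 1]; [:: 1; 1; 2]; [:: 1; 2; 2; 2]; [:: 3; 3; 3; 3]]);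
  (0, [:: [:: 0; 0]; [:: 0; 0; 1]; [:: 1; 1; 1]; [:: 1; 2; 2; 2]; [:: 1; 2; 2; 3]; [:: 3; 3; 3; 3]]);
  (0, [:: [:: 0; 0]; [:: 1; 1; 1]; [:: 2; 2; 2]; [:: 3; 3; 3]]);
  (0, [:: [:: 0; 0]; [:: 0; 1; 1]; [:: 1; 1; 2]; [:: 2; 2; 3]; [:: 2; 3; 3; 3]]);
  (1, [:: [:: 0; 0]; [:: 0; 0; 0]; [:: 1; 1; 1]; [:: 2; 2; 2]; [:: 1; 2; 3; 3]; [:: 2; 3; 3; 3]]);
  (0, [:: [:: 0; 0]; [:: 0; 0; 1]; [:: 0; 1; 2]; [:: 1; 1; 2]; [:: 1; 2; 2; 2]; [:: 1; 3; 3; 3]; [:: 2; 3; 3; 3]]);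
  (0, [:: [:: 1; 1]; [:: 2; 3]]);
  (0, [:: [:: 0; 1]; [:: 0; 2]; [:: 1; 2; 3; 3]]);
  (0, [:: [:: 0; 0]; [:: 0; 1]; [:: 1; 2; 2; 2]; [:: 1; 3; 3; 3]]);
  (0, [:: [:: 0; 0]; [:: 0; 0]; [:: 1; 1; 1; 2]; [:: 1; 2; 2; 3]; [:: 2; 3; 3; 3]]);
  (0, [:: [:: 0; 1]; [:: 1; 2]; [:: 2; 3; 3]]);
  (0, [:: [:: 0; 0]; [:: 1; 2]; [:: 1; 1; 2]; [:: 2; 3; 3; 3]]);
  (0, [:: [:: 0; 0]; [:: 0; 1]; [:: 1; 1; 2]; [:: 1; 2; 2; 2]; [:: 3; 3; 3; 3]]);
  (1, [:: [:: 0; 0]; [:: 0; 0]; [:: 0; 1; 2]; [:: 1; 1; 1; 3]; [:: 2; 2; 2; 3]; [:: 2; 3; 3; 3]]);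
  (0, [:: [:: 0; 1]; [:: 1; 1]; [:: 2; 2; 2]; [:: 3; 3; 3]]);
  (0, [:: [:: 0; 0]; [:: 0; 1]; [:: 1; 1; 2]; [:: 2; 2; 3]; [:: 1; 2; 3; 3]]);
  (0, [:: [:: 0; 0]; [:: 0; 0]; [:: 1; 1; 1]; [:: 2; 2; 2]; [:: 1; 2; 3; 3]; [:: 1; 2; 3; 3]]);
  (0, [:: [:: 0; 0]; [:: 0; 0]; [:: 0; 1; 2]; [:: 1; 1; 1]; [:: 1; 2; 2; 2]; [:: 1; 3; 3; 3]; [:: 2; 3; 3; 3]]);
  (0, [:: [:: 0; 0]; [:: 0; 1]; [:: 1; 1; 1]; [:: 2; 2; 2]; [:: 3; 3; 3]]);
  (0, [:: [:: 0; 0]; [:: 0; 0]; [:: 1; 1; 1]; [:: 1; 1; 2]; [:: 2; 2; 3]; [:: 2; 3; 3; 3]]);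
  (0, [:: [:: 0; 0]; [:: 0; 0]; [:: 0; 1; 2]; [:: 1; 1; 1]; [:: 2; 2; 2]; [:: 1; 2; 3; 3]; [:: 1; 3; 3; 3]]);
  (1, [:: [:: 0; 0]; [:: 0; 0]; [:: 0; 0; 1]; [:: 0; 1; 2]; [:: 1; 1; 2]; [:: 1; 2; 2; 2]; [:: 1; 3; 3; 3]; [:: 2; 3; 3; 3]]);
  (0, [:: [:: 0; 1]; [:: 1; 2]; [:: 3; 3]]);
  (0, [:: [:: 0; 1]; [:: 1; 2]; [:: 1; 3]; [:: 2; 2; 3; 3]]);
  (0, [:: [:: 0; 0]; [:: 0; 1]; [:: 1; 2]; [:: 1; 2; 2; 2]; [:: 1; 3; 3; 3]]);
  (0, [:: [:: 0; 0]; [:: 0; 0]; [:: 1; 2]; [:: 1; 1; 1; 2]; [:: 1; 2; 2; 3]; [:: 2; 3; 3; 3]]);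
  (1, [:: [:: 0; 0]; [:: 0; 1]; [:: 1; 2]; [:: 2; 3; 3]]);
  (0, [:: [:: 0; 0]; [:: 0; 1]; [:: 1; 2]; [:: 1; 1; 2]; [:: 2; 3; 3; 3]]);
  (0, [:: [:: 0; 0]; [:: 0; 0]; [:: 1; 2]; [:: 1; 1; 1]; [:: 1; 2; 2; 3]; [:: 2; 3; 3; 3]]);
  (0, [:: [:: 0; 0]; [:: 0; 0]; [:: 0; 1]; [:: 1; 1; 2]; [:: 1; 2; 2; 2]; [:: 1; 2; 3; 3]; [:: 1; 3; 3; 3]]);
  (0, [:: [:: 0; 0]; [:: 0; 1]; [:: 1; 1]; [:: 2; 2; 2]; [:: 3; 3; 3]]);
  (0, [:: [:: 0; 0]; [:: 0; 1]; [:: 1; 1]; [:: 1; 1; 2]; [:: 2; 2; 3]; [:: 2; 3; 3; 3]]);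
  (0, [:: [:: 0; 0]; [:: 0; 0]; [:: 1; 2]; [:: 1; 1; 1]; [:: 2; 2; 2]; [:: 1; 2; 3; 3]; [:: 1; 3; 3; 3]]);
  (0, [:: [:: 0; 0]; [:: 0; 0]; [:: 0; 1]; [:: 0; 1; 2]; [:: 1; 1; 2]; [:: 1; 2; 2; 2]; [:: 1; 3; 3; 3]; [:: 2; 3; 3; 3]]);
  (1, [:: [:: 0; 0]; [:: 0; 0]; [:: 1; 2]; [:: 1; 2; 2]; [:: 1; 3; 3]; [:: 2; 3; 3]]);
  (0, [:: [:: 0; 0]; [:: 0; 1]; [:: 0; 1]; [:: 1; 1; 2]; [:: 2; 2; 2]; [:: 3; 3; 3]; [:: 1; 2; 3; 3]]);
  (0, [:: [:: 0; 0]; [:: 0; 0]; [:: 0; 1]; [:: 1; 1; 1]; [:: 2; 2; 2]; [:: 2; 2; 3]; [:: 1; 2; 3; 3]; [:: 1; 3; 3; 3]]);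
  (0, [:: [:: 0; 0]; [:: 0; 0]; [:: 0; 0]; [:: 1; 1; 1]; [:: 1; 1; 2]; [:: 2; 2; 2]; [:: 1; 2; 3; 3]; [:: 1; 2; 3; 3]; [:: 2; 3; 3; 3]]);
  (0, [:: [:: 1]]);
  (0, [:: [:: 0]; [:: 1; 1; 2; 3]]);
  (0, [:: [:: 0]; [:: 0; 1; 1; 2]; [:: 1; 2; 3; 3]]);
  (1, [:: [:: 0]; [:: 0; 0; 0; 1]; [:: 1; 2; 2; 2]; [:: 1; 3; 3; 3]]);
  (0, [:: [:: 1]; [:: 1; 2; 3]]);
  (0, [:: [:: 0]; [:: 1; 1; 2]; [:: 1; 2; 3; 3]]);
  (0, [:: [:: 0]; [:: 0; 0; 1]; [:: 1; 2; 2; 2]; [:: 1; 3; 3; 3]]);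
  (0, [:: [:: 0]; [:: 0; 0; 0]; [:: 1; 1; 1; 2]; [:: 1; 2; 2; 3]; [:: 2; 3; 3; 3]]);
  (0, [:: [:: 1]; [:: 0; 1; 2]; [:: 2; 3; 3]]);
  (0, [:: [:: 0]; [:: 0; 1; 2]; [:: 1; 1; 2]; [:: 2; 3; 3; 3]]);
  (0, [:: [:: 0]; [:: 0; 0; 1]; [:: 1; 1; 2]; [:: 1; 2; 2; 2]; [:: 3; 3; 3; 3]]);
  (1, [:: [:: 0]; [:: 0; 0; 0]; [:: 0; 1; 2]; [:: 1; 1; 1; 3]; [:: 2; 2; 2; 3]; [:: 2; 3; 3; 3]]);
  (0, [:: [:: 0]; [:: 1; 1; 1]; [:: 2; 2; 2]; [:: 3; 3; 3]]);
  (0, [:: [:: 0]; [:: 0; 0; 1]; [:: 1; 1; 2]; [:: 2; 2; 3]; [:: 1; 2; 3; 3]]);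
  (0, [:: [:: 0]; [:: 0; 0; 0]; [:: 1; 1; 1]; [:: 2; 2; 2]; [:: 1; 2; 3; 3]; [:: 1; 2; 3; 3]]);
  (0, [:: [:: 0]; [:: 0; 0; 0]; [:: 0; 1; 2]; [:: 1; 1; 1]; [:: 1; 2; 2; 2]; [:: 1; 3; 3; 3]; [:: 2; 3; 3; 3]]);
  (1, [:: [:: 0]; [:: 2; 3]]);
  (0, [:: [:: 1]; [:: 0; 2]; [:: 1; 2; 3; 3]]);
  (0, [:: [:: 0]; [:: 0; 1]; [:: 1; 2; 2; 2]; [:: 1; 3; 3; 3]]);
  (0, [:: [:: 0]; [:: 0; 0]; [:: 1; 1; 1; 2]; [:: 1; 2; 2; 3]; [:: 2; 3; 3; 3]]);
  (0, [:: [:: 0]; [:: 1; 2]; [:: 1; 3; 3]]);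
  (0, [:: [:: 0]; [:: 1; 2]; [:: 1; 1; 2]; [:: 2; 3; 3; 3]]);
  (0, [:: [:: 0]; [:: 0; 1]; [:: 0; 1; 2]; [:: 1; 2; 2; 2]; [:: 1; 3; 3; 3]]);
  (0, [:: [:: 0]; [:: 0; 0]; [:: 0; 1; 2]; [:: 1; 1; 1; 2]; [:: 1; 2; 2; 3]; [:: 2; 3; 3; 3]]);
  (1, [:: [:: 0]; [:: 0; 1]; [:: 0; 1; 2]; [:: 2; 3; 3]]);
  (0, [:: [:: 0]; [:: 0; 1]; [:: 0; 1; 2]; [:: 1; 1; 2]; [:: 2; 3; 3; 3]]);
  (0, [:: [:: 0]; [:: 0; 0]; [:: 0; 1; 2]; [:: 1; 1; 1]; [:: 1; 2; 2; 3]; [:: 2; 3; 3; 3]]);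
  (0, [:: [:: 0]; [:: 0; 0]; [:: 0; 0; 1]; [:: 1; 1; 2]; [:: 1; 2; 2; 2]; [:: 1; 2; 3; 3]; [:: 1; 3; 3; 3]]);
  (0, [:: [:: 0]; [:: 0; 0]; [:: 1; 1; 1]; [:: 2; 2; 2]; [:: 3; 3; 3]]);
  (0, [:: [:: 0]; [:: 0; 0]; [:: 1; 1; 1]; [:: 1; 1; 2]; [:: 2; 2; 3]; [:: 2; 3; 3; 3]]);
  (0, [:: [:: 0]; [:: 0; 0]; [:: 0; 1; 2]; [:: 1; 1; 1]; [:: 2; 2; 2]; [:: 1; 2; 3; 3]; [:: 1; 3; 3; 3]]);
  (0, [:: [:: 0]; [:: 0; 0]; [:: 0; 0; 1]; [:: 0; 1; 2]; [:: 1; 1; 2]; [:: 1; 2; 2; 2]; [:: 1; 3; 3; 3]; [:: 2; 3; 3; 3]]);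
  (0, [:: [:: 0]; [:: 1; 2]; [:: 1; 3]]);
  (1, [:: [:: 0]; [:: 0; 1]; [:: 0; 2]; [:: 1; 2; 3; 3]]);
  (0, [:: [:: 0]; [:: 0; 1]; [:: 0; 1]; [:: 1; 2; 2; 2]; [:: 1; 3; 3; 3]]);
  (0, [:: [:: 0]; [:: 0; 0]; [:: 0; 1]; [:: 1; 1; 1; 2]; [:: 1; 2; 2; 3]; [:: 2; 3; 3; 3]]);
  (0, [:: [:: 0]; [:: 0; 1]; [:: 1; 2]; [:: 2; 3; 3]]);
  (0, [:: [:: 0]; [:: 0; 0]; [:: 1; 2]; [:: 1; 1; 2]; [:: 2; 3; 3; 3]]);
  (0, [:: [:: 0]; [:: 0; 0]; [:: 1; 2]; [:: 1; 1; 1]; [:: 1; 2; 2; 3]; [:: 2; 3; 3; 3]]);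
  (0, [:: [:: 0]; [:: 0; 0]; [:: 0; 1]; [:: 1; 1; 2]; [:: 1; 2; 2; 2]; [:: 1; 2; 3; 3]; [:: 1; 3; 3; 3]]);
  (0, [:: [:: 0]; [:: 0; 1]; [:: 1; 1]; [:: 2; 2; 2]; [:: 3; 3; 3]]);
  (1, [:: [:: 0]; [:: 0; 0]; [:: 0; 1]; [:: 1; 1; 2]; [:: 2; 2; 3]; [:: 2; 3; 3; 3]]);
  (0, [:: [:: 0]; [:: 0; 1]; [:: 0; 1]; [:: 0; 1; 2]; [:: 2; 2; 2]; [:: 1; 2; 3; 3]; [:: 1; 3; 3; 3]]);
  (0, [:: [:: 0]; [:: 0; 0]; [:: 0; 1]; [:: 0; 1; 2]; [:: 1; 1; 2]; [:: 1; 2; 2; 2]; [:: 1; 3; 3; 3]; [:: 2; 3; 3; 3]]);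
  (0, [:: [:: 0]; [:: 0; 0]; [:: 1; 2]; [:: 1; 1; 1]; [:: 2; 2; 2]; [:: 3; 3; 3]]);
  (0, [:: [:: 0]; [:: 0; 0]; [:: 0; 1]; [:: 1; 1; 1]; [:: 2; 2; 2]; [:: 2; 2; 3]; [:: 1; 3; 3; 3]]);
  (0, [:: [:: 0]; [:: 0; 0]; [:: 0; 1]; [:: 1; 1; 1]; [:: 2; 2; 2]; [:: 2; 2; 3]; [:: 1; 2; 3; 3]; [:: 1; 3; 3; 3]]);
  (0, [:: [:: 0]; [:: 0; 0]; [:: 0; 0]; [:: 1; 1; 1]; [:: 1; 1; 2]; [:: 2; 2; 2]; [:: 1; 2; 3; 3]; [:: 1; 2; 3; 3]; [:: 2; 3; 3; 3]]);
  (0, [:: [:: 0]; [:: 1; 2]; [:: 1; 3]; [:: 2; 3]]);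
  (0, [:: [:: 0]; [:: 0; 1]; [:: 1; 2]; [:: 1; 3]; [:: 2; 2; 3; 3]]);
  (1, [:: [:: 0]; [:: 0; 0]; [:: 0; 1]; [:: 1; 2]; [:: 1; 2; 2; 3]; [:: 2; 3; 3; 3]]);
  (0, [:: [:: 0]; [:: 0; 1]; [:: 0; 1]; [:: 0; 2]; [:: 1; 2; 2; 2]; [:: 1; 2; 3; 3]; [:: 1; 3; 3; 3]]);
  (0, [:: [:: 0]; [:: 0; 1]; [:: 1; 2]; [:: 1; 2]; [:: 2; 3; 3]]);
  (0, [:: [:: 0]; [:: 0; 0]; [:: 1; 2]; [:: 1; 2]; [:: 1; 1; 2]; [:: 2; 3; 3; 3]]);
  (0, [:: [:: 0]; [:: 0; 0]; [:: 0; 1]; [:: 1; 2]; [:: 1; 1; 2]; [:: 1; 2; 2; 3]; [:: 2; 3; 3; 3]]);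
  (0, [:: [:: 0]; [:: 0; 0]; [:: 0; 1]; [:: 1; 2]; [:: 1; 1; 2]; [:: 1; 2; 2; 2]; [:: 1; 3; 3; 3]; [:: 2; 3; 3; 3]]);
  (0, [:: [:: 0]; [:: 0; 0]; [:: 1; 2]; [:: 1; 2]; [:: 1; 3; 3]; [:: 2; 3; 3]]);
  (0, [:: [:: 0]; [:: 0; 0]; [:: 0; 1]; [:: 1; 2]; [:: 1; 1; 2]; [:: 2; 2; 3]; [:: 1; 3; 3; 3]]);
  (1, [:: [:: 0]; [:: 0; 0]; [:: 0; 1]; [:: 0; 1]; [:: 0; 1; 2]; [:: 2; 2; 2]; [:: 1; 2; 3; 3]; [:: 1; 3; 3; 3]]);
  (0, [:: [:: 0]; [:: 0; 0]; [:: 0; 1]; [:: 0; 1]; [:: 0; 1; 2]; [:: 1; 1; 2]; [:: 1; 2; 2; 2]; [:: 1; 3; 3; 3]; [:: 2; 3; 3; 3]]);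
  (0, [:: [:: 0]; [:: 0; 0]; [:: 1; 2]; [:: 1; 2]; [:: 1; 1; 1]; [:: 2; 3; 3]; [:: 2; 3; 3]]);
  (0, [:: [:: 0]; [:: 0; 0]; [:: 0; 1]; [:: 0; 1]; [:: 1; 1; 2]; [:: 2; 2; 2]; [:: 3; 3; 3]; [:: 1; 2; 3; 3]]);
  (0, [:: [:: 0]; [:: 0; 0]; [:: 0; 0]; [:: 0; 1]; [:: 1; 1; 1]; [:: 2; 2; 2]; [:: 2; 2; 3]; [:: 1; 2; 3; 3]; [:: 1; 3; 3; 3]]);
  (0, [:: [:: 0]; [:: 0; 0]; [:: 0; 0]; [:: 0; 1]; [:: 1; 1; 1]; [:: 1; 1; 2]; [:: 2; 2; 2]; [:: 1; 2; 3; 3]; [:: 1; 2; 3; 3]; [:: 2; 3; 3; 3]]);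
  (0, [:: [:: 1]; [:: 2]]);
  (0, [:: [:: 0]; [:: 1]; [:: 1; 2; 2; 3]]);
  (0, [:: [:: 0]; [:: 1]; [:: 1; 2; 2; 2]; [:: 1; 3; 3; 3]]);
  (0, [:: [:: 0]; [:: 0]; [:: 1; 1; 1; 2]; [:: 1; 2; 2; 3]; [:: 2; 3; 3; 3]]);
  (0, [:: [:: 0]; [:: 1]; [:: 2; 2; 3]]);
  (1, [:: [:: 0]; [:: 1]; [:: 0; 0; 2]; [:: 1; 2; 3; 3]]);
  (0, [:: [:: 0]; [:: 1]; [:: 0; 0; 1]; [:: 1; 2; 2; 2]; [:: 1; 3; 3; 3]]);
  (0, [:: [:: 0]; [:: 0]; [:: 0; 0; 1]; [:: 1; 1; 1; 2]; [:: 1; 2; 2; 3]; [:: 2; 3; 3; 3]]);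
  (0, [:: [:: 0]; [:: 1]; [:: 0; 1; 2]; [:: 2; 3; 3]]);
  (0, [:: [:: 0]; [:: 0]; [:: 0; 1; 2]; [:: 1; 1; 2]; [:: 2; 3; 3; 3]]);
  (0, [:: [:: 0]; [:: 0]; [:: 0; 1; 2]; [:: 1; 1; 1]; [:: 1; 2; 2; 3]; [:: 2; 3; 3; 3]]);
  (0, [:: [:: 0]; [:: 0]; [:: 0; 0; 1]; [:: 1; 1; 2]; [:: 1; 2; 2; 2]; [:: 1; 2; 3; 3]; [:: 1; 3; 3; 3]]);
  (0, [:: [:: 0]; [:: 0]; [:: 1; 1; 1]; [:: 2; 2; 2]; [:: 3; 3; 3]]);
  (1, [:: [:: 0]; [:: 0]; [:: 0; 0; 1]; [:: 1; 1; 2]; [:: 2; 2; 3]; [:: 2; 3; 3; 3]]);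
  (0, [:: [:: 0]; [:: 1]; [:: 0; 0; 1]; [:: 0; 1; 2]; [:: 2; 2; 2]; [:: 1; 2; 3; 3]; [:: 1; 3; 3; 3]]);
  (0, [:: [:: 0]; [:: 0]; [:: 0; 0; 1]; [:: 0; 1; 2]; [:: 1; 1; 2]; [:: 1; 2; 2; 2]; [:: 1; 3; 3; 3]; [:: 2; 3; 3; 3]]);
  (0, [:: [:: 1]; [:: 2]; [:: 0; 3]]);
  (0, [:: [:: 0]; [:: 1]; [:: 0; 2]; [:: 1; 2; 3; 3]]);
  (0, [:: [:: 0]; [:: 0]; [:: 0; 1]; [:: 1; 2; 2; 2]; [:: 1; 3; 3; 3]]);
  (0, [:: [:: 0]; [:: 0]; [:: 0; 1]; [:: 1; 1; 1; 2]; [:: 1; 2; 2; 3]; [:: 2; 3; 3; 3]]);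
  (0, [:: [:: 0]; [:: 1]; [:: 1; 2]; [:: 2; 3; 3]]);
  (0, [:: [:: 0]; [:: 0]; [:: 1; 2]; [:: 1; 1; 2]; [:: 2; 3; 3; 3]]);
  (1, [:: [:: 0]; [:: 0]; [:: 0; 1]; [:: 0; 1; 2]; [:: 1; 2; 2; 3]; [:: 2; 3; 3; 3]]);
  (0, [:: [:: 0]; [:: 1]; [:: 0; 1]; [:: 0; 0; 2]; [:: 1; 2; 2; 2]; [:: 1; 2; 3; 3]; [:: 1; 3; 3; 3]]);
  (0, [:: [:: 0]; [:: 1]; [:: 0; 1]; [:: 2; 2; 2]; [:: 3; 3; 3]]);
  (0, [:: [:: 0]; [:: 0]; [:: 0; 1]; [:: 1; 1; 2]; [:: 2; 2; 3]; [:: 1; 2; 3; 3]]);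
  (0, [:: [:: 0]; [:: 0]; [:: 0; 1]; [:: 0; 1; 2]; [:: 1; 1; 2]; [:: 1; 2; 2; 3]; [:: 2; 3; 3; 3]]);
  (0, [:: [:: 0]; [:: 0]; [:: 0; 1]; [:: 0; 1; 2]; [:: 1; 1; 2]; [:: 1; 2; 2; 2]; [:: 1; 3; 3; 3]; [:: 2; 3; 3; 3]]);
  (0, [:: [:: 0]; [:: 0]; [:: 0; 1]; [:: 1; 1; 1]; [:: 2; 2; 2]; [:: 3; 3; 3]]);
  (0, [:: [:: 0]; [:: 0]; [:: 0; 1]; [:: 0; 1; 2]; [:: 1; 1; 2]; [:: 2; 2; 3]; [:: 1; 3; 3; 3]]);
  (1, [:: [:: 0]; [:: 0]; [:: 0; 1]; [:: 0; 0; 1]; [:: 0; 1; 2]; [:: 2; 2; 2]; [:: 1; 2; 3; 3]; [:: 1; 3; 3; 3]]);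
  (0, [:: [:: 0]; [:: 0]; [:: 0; 1]; [:: 0; 0; 1]; [:: 0; 1; 2]; [:: 1; 1; 2]; [:: 1; 2; 2; 2]; [:: 1; 3; 3; 3]; [:: 2; 3; 3; 3]]);
  (0, [:: [:: 1]; [:: 2]; [:: 1; 2]; [:: 3; 3]]);
  (0, [:: [:: 0]; [:: 1]; [:: 0; 2]; [:: 1; 2]; [:: 1; 2; 3; 3]]);
  (0, [:: [:: 0]; [:: 0]; [:: 0; 1]; [:: 1; 2]; [:: 1; 2; 2; 2]; [:: 1; 3; 3; 3]]);
  (0, [:: [:: 0]; [:: 0]; [:: 0; 1]; [:: 0; 1]; [:: 1; 2; 2; 2]; [:: 1; 2; 2; 3]; [:: 1; 3; 3; 3]]);
  (0, [:: [:: 0]; [:: 1]; [:: 0; 1]; [:: 1; 2]; [:: 2; 3; 3]]);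
  (0, [:: [:: 0]; [:: 0]; [:: 0; 1]; [:: 1; 2]; [:: 1; 1; 2]; [:: 2; 3; 3; 3]]);
  (0, [:: [:: 0]; [:: 0]; [:: 0; 1]; [:: 0; 1]; [:: 2; 2; 2]; [:: 1; 2; 3; 3]; [:: 1; 2; 3; 3]]);
  (1, [:: [:: 0]; [:: 0]; [:: 0; 1]; [:: 0; 1]; [:: 0; 0; 2]; [:: 1; 2; 2; 2]; [:: 1; 2; 3; 3]; [:: 1; 3; 3; 3]]);
  (0, [:: [:: 0]; [:: 0]; [:: 1; 2]; [:: 1; 2]; [:: 1; 3; 3]; [:: 2; 3; 3]]);
  (0, [:: [:: 0]; [:: 0]; [:: 0; 1]; [:: 1; 2]; [:: 1; 1; 2]; [:: 2; 2; 3]; [:: 1; 3; 3; 3]]);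
  (0, [:: [:: 0]; [:: 0]; [:: 0; 1]; [:: 0; 1]; [:: 0; 1; 2]; [:: 2; 2; 2]; [:: 1; 2; 3; 3]; [:: 1; 3; 3; 3]]);
  (0, [:: [:: 0]; [:: 0]; [:: 0; 0]; [:: 0; 1]; [:: 0; 1; 2]; [:: 1; 1; 2]; [:: 1; 2; 2; 2]; [:: 1; 3; 3; 3]; [:: 2; 3; 3; 3]]);
  (0, [:: [:: 0]; [:: 1]; [:: 0; 1]; [:: 0; 2]; [:: 1; 1; 2]; [:: 2; 2; 3]; [:: 3; 3; 3]]);
  (0, [:: [:: 0]; [:: 0]; [:: 0; 1]; [:: 0; 1]; [:: 1; 1; 2]; [:: 2; 2; 2]; [:: 3; 3; 3]; [:: 1; 2; 3; 3]]);
  (0, [:: [:: 0]; [:: 0]; [:: 0; 0]; [:: 0; 1]; [:: 1; 1; 1]; [:: 2; 2; 2]; [:: 2; 2; 3]; [:: 1; 2; 3; 3]; [:: 1; 3; 3; 3]]);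
  (1, [:: [:: 0]; [:: 0]; [:: 0; 0]; [:: 0; 1]; [:: 0; 0; 1]; [:: 1; 1; 2]; [:: 2; 2; 2]; [:: 1; 2; 3; 3]; [:: 1; 2; 3; 3]; [:: 2; 3; 3; 3]]);
  (0, [:: [:: 0]; [:: 0]; [:: 1; 2]; [:: 1; 3]; [:: 2; 3]]);
  (0, [:: [:: 0]; [:: 0]; [:: 1; 2]; [:: 1; 2]; [:: 1; 3]; [:: 2; 3; 3; 3]]);
  (0, [:: [:: 0]; [:: 0]; [:: 0; 1]; [:: 1; 2]; [:: 1; 2]; [:: 1; 2; 2; 3]; [:: 1; 3; 3; 3]]);
  (0, [:: [:: 0]; [:: 0]; [:: 0; 1]; [:: 0; 1]; [:: 0; 2]; [:: 1; 2; 2; 2]; [:: 1; 2; 3; 3]; [:: 1; 3; 3; 3]]);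
  (1, [:: [:: 0]; [:: 0]; [:: 0; 1]; [:: 1; 2]; [:: 2; 3]; [:: 2; 3; 3]]);
  (0, [:: [:: 0]; [:: 1]; [:: 0; 1]; [:: 0; 2]; [:: 1; 2]; [:: 2; 2; 3]; [:: 1; 3; 3; 3]]);
  (0, [:: [:: 0]; [:: 0]; [:: 0; 1]; [:: 0; 1]; [:: 1; 2]; [:: 2; 2; 2]; [:: 1; 2; 3; 3]; [:: 1; 3; 3; 3]]);
  (0, [:: [:: 0]; [:: 0]; [:: 0; 0]; [:: 0; 1]; [:: 1; 2]; [:: 1; 1; 2]; [:: 1; 2; 2; 2]; [:: 1; 3; 3; 3]; [:: 2; 3; 3; 3]]);
  (0, [:: [:: 0]; [:: 0]; [:: 0; 1]; [:: 1; 2]; [:: 1; 2]; [:: 1; 3; 3]; [:: 2; 3; 3]]);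
  (0, [:: [:: 0]; [:: 0]; [:: 0; 1]; [:: 1; 2]; [:: 1; 2]; [:: 1; 1; 2]; [:: 2; 3; 3]; [:: 2; 3; 3; 3]]);
  (0, [:: [:: 0]; [:: 0]; [:: 0; 0]; [:: 1; 2]; [:: 1; 2]; [:: 1; 1; 1]; [:: 2; 2; 2]; [:: 1; 3; 3; 3]; [:: 2; 3; 3; 3]]);
  (0, [:: [:: 0]; [:: 0]; [:: 0; 0]; [:: 0; 1]; [:: 0; 1]; [:: 1; 1; 2]; [:: 2; 2; 2]; [:: 1; 2; 3; 3]; [:: 1; 2; 3; 3]; [:: 1; 2; 3; 3]]);
  (1, [:: [:: 0]; [:: 0]; [:: 0; 1]; [:: 0; 1]; [:: 0; 2]; [:: 1; 1; 2]; [:: 2; 2; 3]; [:: 3; 3; 3]]);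
  (0, [:: [:: 0]; [:: 0]; [:: 0; 1]; [:: 0; 1]; [:: 0; 1]; [:: 1; 1; 2]; [:: 2; 2; 2]; [:: 3; 3; 3]; [:: 1; 2; 3; 3]]);
  (0, [:: [:: 0]; [:: 0]; [:: 0; 0]; [:: 0; 1]; [:: 0; 1]; [:: 1; 1; 1]; [:: 2; 2; 2]; [:: 2; 2; 3]; [:: 1; 2; 3; 3]; [:: 1; 3; 3; 3]]);
  (0, [:: [:: 0]; [:: 0]; [:: 0; 0]; [:: 0; 1]; [:: 0; 1]; [:: 0; 1; 2]; [:: 1; 1; 2]; [:: 2; 2; 2]; [:: 1; 2; 3; 3]; [:: 1; 2; 3; 3]; [:: 1; 3; 3; 3]]);
  (0, [:: [:: 1]; [:: 2]; [:: 3]]);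
  (0, [:: [:: 0]; [:: 1]; [:: 2]; [:: 1; 2; 3; 3]]);
  (0, [:: [:: 0]; [:: 0]; [:: 1]; [:: 1; 2; 2; 2]; [:: 1; 3; 3; 3]]);
  (1, [:: [:: 0]; [:: 0]; [:: 1]; [:: 0; 0; 1; 2]; [:: 1; 2; 2; 3]; [:: 2; 3; 3; 3]]);
  (0, [:: [:: 1]; [:: 2]; [:: 3]; [:: 1; 2; 3]]);
  (0, [:: [:: 0]; [:: 1]; [:: 1]; [:: 2; 2; 2]; [:: 0; 3; 3; 3]]);
  (0, [:: [:: 0]; [:: 0]; [:: 1]; [:: 0; 1; 2]; [:: 1; 2; 2; 2]; [:: 1; 3; 3; 3]]);
  (0, [:: [:: 0]; [:: 0]; [:: 1]; [:: 0; 0; 1]; [:: 1; 2; 2; 2]; [:: 1; 2; 2; 3]; [:: 1; 3; 3; 3]]);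
  (0, [:: [:: 0]; [:: 1]; [:: 1]; [:: 0; 1; 2]; [:: 2; 3; 3]]);
  (0, [:: [:: 0]; [:: 0]; [:: 1]; [:: 0; 1; 2]; [:: 1; 1; 2]; [:: 2; 3; 3; 3]]);
  (0, [:: [:: 0]; [:: 0]; [:: 1]; [:: 0; 0; 1]; [:: 2; 2; 2]; [:: 1; 2; 3; 3]; [:: 1; 2; 3; 3]]);
  (1, [:: [:: 0]; [:: 0]; [:: 1]; [:: 0; 0; 1]; [:: 0; 0; 2]; [:: 1; 2; 2; 2]; [:: 1; 2; 3; 3]; [:: 1; 3; 3; 3]]);
  (0, [:: [:: 0]; [:: 0]; [:: 1]; [:: 1; 1; 1]; [:: 2; 2; 2]; [:: 3; 3; 3]]);
  (0, [:: [:: 0]; [:: 0]; [:: 1]; [:: 0; 1; 2]; [:: 1; 1; 2]; [:: 2; 2; 3]; [:: 1; 3; 3; 3]]);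
  (0, [:: [:: 0]; [:: 0]; [:: 1]; [:: 0; 0; 1]; [:: 0; 1; 2]; [:: 2; 2; 2]; [:: 1; 2; 3; 3]; [:: 1; 3; 3; 3]]);
  (0, [:: [:: 0]; [:: 0]; [:: 0]; [:: 0; 0; 1]; [:: 0; 1; 2]; [:: 1; 1; 2]; [:: 1; 2; 2; 2]; [:: 1; 3; 3; 3]; [:: 2; 3; 3; 3]]);
  (1, [:: [:: 0]; [:: 1]; [:: 2]; [:: 0; 3]]);
  (0, [:: [:: 0]; [:: 1]; [:: 1]; [:: 0; 2]; [:: 1; 2; 3; 3]]);
  (0, [:: [:: 0]; [:: 0]; [:: 1]; [:: 0; 1]; [:: 1; 2; 2; 2]; [:: 1; 3; 3; 3]]);
  (0, [:: [:: 0]; [:: 0]; [:: 1]; [:: 0; 1]; [:: 0; 2; 2; 2]; [:: 1; 2; 3; 3]; [:: 1; 2; 3; 3]]);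
  (0, [:: [:: 0]; [:: 0]; [:: 1]; [:: 1; 2]; [:: 2; 3; 3]]);
  (0, [:: [:: 0]; [:: 0]; [:: 1]; [:: 1; 2]; [:: 1; 1; 2]; [:: 2; 3; 3; 3]]);
  (0, [:: [:: 0]; [:: 0]; [:: 1]; [:: 0; 1]; [:: 2; 2; 2]; [:: 1; 2; 3; 3]; [:: 1; 2; 3; 3]]);
  (0, [:: [:: 0]; [:: 0]; [:: 1]; [:: 0; 1]; [:: 0; 0; 2]; [:: 1; 2; 2; 2]; [:: 1; 2; 3; 3]; [:: 1; 3; 3; 3]]);
  (1, [:: [:: 0]; [:: 0]; [:: 1]; [:: 0; 1]; [:: 2; 2; 2]; [:: 3; 3; 3]]);
  (0, [:: [:: 0]; [:: 1]; [:: 1]; [:: 0; 2]; [:: 0; 1; 2]; [:: 2; 2; 3]; [:: 1; 3; 3; 3]]);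
  (0, [:: [:: 0]; [:: 0]; [:: 1]; [:: 0; 1]; [:: 0; 1; 2]; [:: 2; 2; 2]; [:: 1; 2; 3; 3]; [:: 1; 3; 3; 3]]);
  (0, [:: [:: 0]; [:: 0]; [:: 0]; [:: 0; 1]; [:: 0; 1; 2]; [:: 1; 1; 2]; [:: 1; 2; 2; 2]; [:: 1; 3; 3; 3]; [:: 2; 3; 3; 3]]);
  (0, [:: [:: 0]; [:: 0]; [:: 1]; [:: 0; 1]; [:: 1; 1; 2]; [:: 2; 2; 2]; [:: 3; 3; 3]]);
  (0, [:: [:: 0]; [:: 0]; [:: 1]; [:: 0; 1]; [:: 1; 1; 2]; [:: 2; 2; 2]; [:: 3; 3; 3]; [:: 1; 2; 3; 3]]);
  (0, [:: [:: 0]; [:: 0]; [:: 0]; [:: 0; 1]; [:: 1; 1; 1]; [:: 2; 2; 2]; [:: 2; 2; 3]; [:: 1; 2; 3; 3]; [:: 1; 3; 3; 3]]);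
  (0, [:: [:: 0]; [:: 0]; [:: 0]; [:: 0; 1]; [:: 0; 0; 1]; [:: 1; 1; 2]; [:: 2; 2; 2]; [:: 1; 2; 3; 3]; [:: 1; 2; 3; 3]; [:: 1; 2; 3; 3]]);
  (0, [:: [:: 0]; [:: 1]; [:: 2]; [:: 1; 2]; [:: 3; 3]]);
  (1, [:: [:: 0]; [:: 0]; [:: 1]; [:: 0; 2]; [:: 1; 2]; [:: 2; 3; 3; 3]]);
  (0, [:: [:: 0]; [:: 1]; [:: 1]; [:: 0; 2]; [:: 0; 2]; [:: 1; 2; 3; 3]; [:: 1; 2; 3; 3]]);
  (0, [:: [:: 0]; [:: 0]; [:: 1]; [:: 0; 1]; [:: 0; 2]; [:: 1; 2; 2; 2]; [:: 1; 2; 3; 3]; [:: 1; 3; 3; 3]]);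
  (0, [:: [:: 0]; [:: 0]; [:: 1]; [:: 1; 2]; [:: 1; 2]; [:: 2; 3; 3]]);
  (0, [:: [:: 0]; [:: 0]; [:: 1]; [:: 0; 1]; [:: 1; 2]; [:: 2; 2; 2]; [:: 1; 3; 3; 3]]);
  (0, [:: [:: 0]; [:: 0]; [:: 1]; [:: 0; 1]; [:: 1; 2]; [:: 2; 2; 2]; [:: 1; 2; 3; 3]; [:: 1; 3; 3; 3]]);
  (0, [:: [:: 0]; [:: 0]; [:: 0]; [:: 0; 1]; [:: 1; 2]; [:: 1; 1; 2]; [:: 1; 2; 2; 2]; [:: 1; 3; 3; 3]; [:: 2; 3; 3; 3]]);
  (0, [:: [:: 0]; [:: 0]; [:: 1]; [:: 0; 1]; [:: 1; 2]; [:: 2; 2; 2]; [:: 3; 3; 3]]);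
  (1, [:: [:: 0]; [:: 0]; [:: 1]; [:: 0; 1]; [:: 0; 2]; [:: 0; 1; 2]; [:: 2; 2; 3]; [:: 1; 3; 3; 3]]);
  (0, [:: [:: 0]; [:: 0]; [:: 1]; [:: 0; 1]; [:: 0; 1]; [:: 0; 1; 2]; [:: 2; 2; 2]; [:: 1; 2; 3; 3]; [:: 1; 3; 3; 3]]);
  (0, [:: [:: 0]; [:: 0]; [:: 0]; [:: 0; 1]; [:: 0; 1]; [:: 0; 1; 2]; [:: 1; 1; 2]; [:: 1; 2; 2; 2]; [:: 1; 3; 3; 3]; [:: 2; 3; 3; 3]]);
  (0, [:: [:: 0]; [:: 0]; [:: 1]; [:: 0; 1]; [:: 0; 2]; [:: 1; 1; 2]; [:: 2; 2; 3]; [:: 3; 3; 3]]);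
  (0, [:: [:: 0]; [:: 0]; [:: 0]; [:: 0; 1]; [:: 0; 1]; [:: 1; 1; 2]; [:: 2; 2; 2]; [:: 3; 3; 3]; [:: 1; 2; 3; 3]]);
  (0, [:: [:: 0]; [:: 0]; [:: 0]; [:: 0; 1]; [:: 0; 1]; [:: 1; 1; 1]; [:: 2; 2; 2]; [:: 2; 2; 3]; [:: 1; 2; 3; 3]; [:: 1; 3; 3; 3]]);
  (0, [:: [:: 0]; [:: 0]; [:: 0]; [:: 0; 1]; [:: 0; 1]; [:: 0; 1; 2]; [:: 1; 1; 2]; [:: 2; 2; 2]; [:: 1; 2; 3; 3]; [:: 1; 2; 3; 3]; [:: 1; 3; 3; 3]]);
  (0, [:: [:: 0]; [:: 0]; [:: 1]; [:: 1; 2]; [:: 1; 3]; [:: 2; 3]]);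
  (0, [:: [:: 0]; [:: 0]; [:: 1]; [:: 0; 2]; [:: 1; 2]; [:: 1; 2]; [:: 1; 3; 3; 3]]);
  (1, [:: [:: 0]; [:: 0]; [:: 1]; [:: 0; 1]; [:: 0; 2]; [:: 0; 2]; [:: 1; 2; 3; 3]; [:: 1; 2; 3; 3]]);
  (0, [:: [:: 0]; [:: 0]; [:: 1]; [:: 0; 1]; [:: 0; 1]; [:: 0; 2]; [:: 1; 2; 2; 2]; [:: 1; 2; 3; 3]; [:: 1; 3; 3; 3]]);
  (0, [:: [:: 0]; [:: 0]; [:: 1]; [:: 1; 2]; [:: 1; 2]; [:: 1; 3]; [:: 2; 3; 3]]);
  (0, [:: [:: 0]; [:: 0]; [:: 1]; [:: 0; 1]; [:: 0; 2]; [:: 1; 2]; [:: 2; 2; 3]; [:: 1; 3; 3; 3]]);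
  (0, [:: [:: 0]; [:: 0]; [:: 0]; [:: 0; 1]; [:: 0; 1]; [:: 1; 2]; [:: 2; 2; 2]; [:: 1; 2; 3; 3]; [:: 1; 3; 3; 3]]);
  (0, [:: [:: 0]; [:: 0]; [:: 0]; [:: 0; 1]; [:: 0; 1]; [:: 1; 2]; [:: 1; 1; 2]; [:: 1; 2; 2; 2]; [:: 1; 3; 3; 3]; [:: 2; 3; 3; 3]]);
  (0, [:: [:: 0]; [:: 0]; [:: 1]; [:: 0; 1]; [:: 1; 2]; [:: 1; 2]; [:: 2; 3; 3]; [:: 2; 3; 3]]);
  (0, [:: [:: 0]; [:: 0]; [:: 0]; [:: 0; 1]; [:: 1; 2]; [:: 1; 2]; [:: 1; 1; 2]; [:: 2; 3; 3]; [:: 2; 3; 3; 3]]);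
  (1, [:: [:: 0]; [:: 0]; [:: 0]; [:: 0; 1]; [:: 0; 1]; [:: 0; 1]; [:: 2; 2; 2]; [:: 2; 2; 3]; [:: 1; 2; 3; 3]; [:: 1; 3; 3; 3]]);
  (0, [:: [:: 0]; [:: 0]; [:: 1]; [:: 0; 1]; [:: 0; 1]; [:: 0; 2]; [:: 0; 1; 2]; [:: 2; 2; 2]; [:: 1; 2; 3; 3]; [:: 1; 2; 3; 3]; [:: 1; 3; 3; 3]]);
  (0, [:: [:: 0]; [:: 0]; [:: 0]; [:: 1; 2]; [:: 1; 2]; [:: 1; 3]; [:: 1; 2; 2]; [:: 1; 3; 3]; [:: 2; 3; 3]]);
  (0, [:: [:: 0]; [:: 0]; [:: 0]; [:: 0; 1]; [:: 0; 1]; [:: 1; 2]; [:: 1; 1; 2]; [:: 2; 2; 2]; [:: 3; 3; 3]; [:: 1; 2; 3; 3]]);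
  (0, [:: [:: 0]; [:: 0]; [:: 0]; [:: 0; 1]; [:: 0; 1]; [:: 0; 1]; [:: 1; 1; 2]; [:: 2; 2; 2]; [:: 2; 2; 3]; [:: 1; 2; 3; 3]; [:: 1; 3; 3; 3]]);
  (0, [:: [:: 0]; [:: 0]; [:: 0]; [:: 0; 1]; [:: 0; 1]; [:: 0; 1]; [:: 1; 1; 2]; [:: 2; 2; 2]; [:: 2; 2; 3]; [:: 1; 2; 3; 3]; [:: 1; 2; 3; 3]; [:: 1; 3; 3; 3]])].

Definition canon n1 n2 n3 n4 := nseq n1 1 ++ nseq n2 2 ++ nseq n3 3 ++ nseq n4 4.

Definition checkn n1 n2 n3 n4 : bool :=
  let t := nth (0, [::]) table (n1 * 64 + n2 * 16 + n3 * 4 + n4) in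
  let Ls := map (map lab) t.2 in
  (map size Ls == canon n1 n2 n3 n4) && balb (lab t.1) Ls.

Lemma table_ok : all (fun n1 => all (fun n2 => all (fun n3 => all (fun n4 =>
  checkn n1 n2 n3 n4) (iota 0 4)) (iota 0 4)) (iota 0 4)) (iota 0 4).
Proof. Time vm_compute. reflexivity. Qed.


Lemma perm_cnt (s t : seq nat) : (forall x, count_mem x s = count_mem x t) -> perm_eq s t.
Proof. by move=> H; apply/allP => x _; rewrite /= H. Qed.

Lemma good_base n1 n2 n3 n4 : n1 < 4 -> n2 < 4 -> n3 < 4 -> n4 < 4 ->
  Good (canon n1 n2 n3 n4).
Proof.
move=> h1 h2 h3 h4.
have := table_ok => /allP /(_ n1); rewrite mem_iota => /(_ h1) /allP /(_ n2).
rewrite mem_iota => /(_ h2) /allP /(_ n3); rewrite mem_iota => /(_ h3) /allP /(_ n4).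
rewrite mem_iota => /(_ h4) /andP [/eqP H1 H2].
by exists (lab (nth (0, [::]) table (n1 * 64 + n2 * 16 + n3 * 4 + n4)).1), (map (map lab) (nth (0, [::]) table (n1 * 64 + n2 * 16 + n3 * 4 + n4)).2); split; [rewrite H1 | apply: balbP; exact: H2].
Qed.

Lemma good_all ks : all (fun k => 0 < k) ks -> Good ks.
Proof.
have [n] := ubnP (sumn ks); elim: n ks => // n IH ks Hlt Hpos.
have Hmem : forall k, k \in ks -> 0 < k by move=> k; move/allP: Hpos; apply.
case: (boolP (has (fun k => 4 < k) ks)) => [/hasP [k kks k4] | Hno].
  have P := perm_to_rem kks.
  have Ek : k - 4 + 4 = k := subnK (ltnW k4).
  have G1 : Good ((k - 4) :: rem k ks).
    apply: IH.
      move: Hlt; rewrite (perm_sumn P) /= => H; lia.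
    rewrite /= subn_gt0 k4 /=; apply/allP => y /mem_rem; exact: Hmem.
  have := good_big G1; rewrite Ek => G2.
  by apply: good_perm G2; rewrite perm_sym.
have Hle : forall k, k \in ks -> k <= 4.
  by move=> k kks; rewrite leqNgt; apply: contraNN Hno => H; apply/hasP; exists k.
case: (boolP (has (fun k => 3 < count_mem k ks) ks)) => [/hasP [k kks k3] | Hno2].
  pose R := filter (predC1 k) ks ++ nseq (count_mem k ks - 4) k.
  have P : perm_eq (nseq 4 k ++ R) ks.
    apply: perm_cnt => x; rewrite /R !count_cat !count_nseq count_filter /=.
    case: (eqVneq k x) => [<-|kx].
      rewrite (@eq_count _ _ pred0); last by move=> y /=; rewrite andbN.
      rewrite count_pred0 /= !mul1n.
      by rewrite add0n subnKC.
    rewrite /= !mul0n add0n addn0; apply: eq_count => y /=.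
    by case: eqP => // ->; rewrite eq_sym kx.
  apply: (good_perm P); apply: good_add4; first by rewrite Hmem //= Hle.
  apply: IH.
    have := perm_sumn P; rewrite sumn_cat /= => E.
    have k0 : 0 < k := Hmem k kks. lia.
  apply/allP => y; rewrite mem_cat => /orP [|/nseqP [-> _]]; last exact: Hmem.
  by rewrite mem_filter => /andP [_]; exact: Hmem.
have Hc : forall i, count_mem i ks < 4.
  move=> i; case: (boolP (i \in ks)) => [iks | /count_memPn -> //].
  by rewrite ltnNge; apply: contraNN Hno2 => H; apply/hasP; exists i.
apply: (good_perm (ks := canon (count_mem 1 ks) (count_mem 2 ks) (count_mem 3 ks) (count_mem 4 ks))).
  apply: perm_cnt => x; rewrite /canon !count_cat !count_nseq /=.
  case: x => [|[|[|[|[|x]]]]] /=; rewrite ?mul1n ?mul0n ?addn0 ?add0n //.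
    by apply/esym/count_memPn; apply/negP => /Hmem.
  by apply/esym/count_memPn; apply/negP => /Hle.
by apply: good_base.
Qed.


Lemma perm_map_inv (T : eqType) (f : T -> nat) (t : seq nat) (s : seq T) :
  perm_eq (map f s) t -> exists s', perm_eq s s' /\ map f s' = t.
Proof.
elim: t s => [|y t IH] s P.
  have := perm_size P; rewrite size_map /= => /size0nil ->; by exists [::].
have : y \in map f s by rewrite (perm_mem P) mem_head.
case/mapP => z zs Hz.
have Pz := perm_to_rem zs.
have P2 : perm_eq (map f (rem z s)) t.
  have := perm_map f Pz; rewrite perm_sym => /perm_trans /(_ P).
  by rewrite /= Hz perm_cons.
have [s'' [P3 E3]] := IH _ P2.
exists (z :: s''); split; last by rewrite /= E3 Hz.
by apply: perm_trans Pz _; rewrite perm_cons.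
Qed.

Lemma big_petal (V : finType) (R : Type) (idx : R) (op : Monoid.com_law idx)
  (x0 : V) (P : {set V}) (L : seq Agrp) (G : Agrp -> R) :
  size L = #|P| ->
  \big[op/idx]_(v in P) G (nth 0%R L (index v (enum P))) = \big[op/idx]_(y <- L) G y.
Proof.
move=> HL; rewrite -big_enum (big_nth x0) [RHS](big_nth 0%R) -cardE -HL.
apply: eq_big_nat => i /andP [_ Hi].
rewrite index_uniq ?enum_uniq //; by rewrite -cardE -HL.
Qed.


Lemma esum_big L : esum L = (\sum_(y <- L) y)%R.
Proof. by elim: L => [|y L IH]; rewrite ?big_nil ?big_cons //= IH. Qed.

Theorem theorem4 (V : finType) (E : {set {set V}}) :
  is_star E -> A_cordial E.
Proof.
move=> [E0 [Hsz [x [Hx [Hdisj Hcov]]]]].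
pose es := enum E.
pose k (e : {set V}) := #|e :\ x|.
have kpos : all (fun k => 0 < k) (map k es).
  apply/allP => n /mapP [e]; rewrite mem_enum => eE ->.
  have := Hsz e eE; rewrite (cardsD1 x e) Hx //= /k; lia.
have [c0 [Ls [P B]]] := good_all kpos.
have [Ls' [P' S']] := perm_map_inv P.
have B' : bal c0 Ls'.
  by move=> a b; rewrite -!(vc_perm _ _ P') -!(ec_perm _ _ P'); exact: B.
pose Lf e := nth [::] Ls' (index e es).
have Hsize : size Ls' = size es by rewrite -(size_map size) S' size_map.
have HLs : map Lf es = Ls'.
  apply: (@eq_from_nth _ [::]); rewrite size_map // => i Hi.
  by rewrite (nth_map set0) // /Lf index_uniq ?enum_uniq.
have Hsz' : forall e, e \in E -> size (Lf e) = #|e :\ x|.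
  move=> e eE; rewrite /Lf.
  have ei : index e es < size es by rewrite index_mem mem_enum.
  rewrite -(nth_map [::] 0 size) ?Hsize // S' (nth_map set0) // nth_index //.
  by rewrite mem_enum.
pose pe v := [pick e in E | v \in e].
pose c (v : V) : Agrp := if v == x then c0 else
   if pe v is Some e then nth 0%R (Lf e) (index v (enum (e :\ x))) else 0%R.
have Hpe : forall e v, e \in E -> v \in e :\ x -> pe v = Some e.
  move=> e v eE; rewrite in_setD1 => /andP [vx ve]; rewrite /pe.
  case: pickP => [e' /andP [e'E ve'] | /(_ e)]; last by rewrite eE ve.
  case: (eqVneq e' e) => [-> //| ne].
  have := Hdisj _ _ e'E eE ne => /setP /(_ v).
  by rewrite !inE ve ve' (negbTE vx).
have Hpe2 : forall e v, pe v = Some e -> e \in E /\ v \in e.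
  move=> e v; rewrite /pe; case: pickP => [e' /andP [e'E ve'] [<-] | _] //.
have Hp : forall v, v != x -> odflt set0 (pe v) \in E.
  move=> v vx; have [e eE ve] := Hcov v.
  by rewrite (Hpe e v eE) // in_setD1 vx ve.
have Hc : forall e v, e \in E -> v \in e :\ x ->
    c v = nth 0%R (Lf e) (index v (enum (e :\ x))).
  move=> e v eE ve; have vx : v != x by move: ve; rewrite in_setD1 => /andP [].
  by rewrite /c (negbTE vx) (Hpe e v eE ve).
have Hb : forall b : bool, (if b then 1 else 0) = b by case.
exists c; split.
  suff Hv : forall a, vcount c a = vc c0 Ls' a.
    by move=> a b; rewrite !Hv; case: (B' a b).
  move=> a; rewrite /vcount -sum1_card.
  rewrite (eq_bigl (fun v => c v == a)); last by move=> v; rewrite inE.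
  rewrite big_mkcond (bigD1 x) //= {1}/c eqxx Hb /vc; congr (_ + _).
  rewrite (partition_big (fun v => odflt set0 (pe v)) (mem E)) //.
  rewrite -HLs sumnE !big_map big_enum /=.
  apply: eq_bigr => e eE.
  rewrite (eq_bigl (fun v => v \in e :\ x)); last first.
    move=> v /=; case: (boolP (v \in e :\ x)) => [ve | nve].
      rewrite (Hpe _ _ eE ve) /= eqxx andbT.
      by move: ve; rewrite in_setD1 => /andP [].
    apply/negbTE; apply: contra nve => /andP [vx /eqP pev].
    move: pev; case Epe: (pe v) => [e'|] /= pev; last first.
      have [e2 e2E ve2] := Hcov v; by rewrite (Hpe e2 v e2E) // in_setD1 vx ve2 in Epe.
    have [_ ve'] := Hpe2 _ _ Epe; by rewrite -pev in_setD1 vx.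
  rewrite (eq_bigr (fun v => if nth 0%R (Lf e) (index v (enum (e :\ x))) == a then 1 else 0)); last first.
    by move=> v ve; rewrite (Hc e v eE ve).
  rewrite (big_petal addn x (fun y => if y == a then 1 else 0)) ?Hsz' //.
  by rewrite -big_mkcond sum1_count.
suff He : forall a, ecount E c a = ec c0 Ls' a.
  by move=> a b; rewrite !He; case: (B' a b).
move=> a; rewrite /ecount -sum1_card.
rewrite (eq_bigl (fun e => (e \in E) && (edge_label c e == a))); last by move=> e; rewrite inE.
rewrite -big_enum_cond sum1_count /ec -HLs count_map.
apply: eq_in_count => e; rewrite mem_enum => eE /=.
congr (_ == a).
rewrite /edge_label (bigD1 x) ?Hx //= {1}/c eqxx; congr (_ + _)%R.
rewrite (eq_bigl (fun v => v \in e :\ x)); last by move=> v; rewrite in_setD1 andbC.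
rewrite (eq_bigr (fun v => nth 0%R (Lf e) (index v (enum (e :\ x))))); last first.
  by move=> v ve; rewrite (Hc e v eE ve).
by rewrite (big_petal +%R%R x id) ?Hsz' // esum_big.
Qed.
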